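(* Fix integers $p\ge 3$, $q\ge 1$ and a real $\eta$ with $0<\eta<\frac{1}{7p^5q}$. For all sufficiently large $n$, for the graph $G$ and partition $V_1,\dots,V_p$ described in the context, the set $W=\bigcup_{i=1}^p W_i$, where $W_i=\{v\in V_i: d_{V_i}(v)\ge 2\eta n\}$, satisfies $|W|\le \frac12\eta n$.
   Context: $B_{p,q}=K_p\nabla qK_1$ is the join of a clique $K_p$ and an independent set of $q$ vertices. $\mathcal{G}(n,p,q)$ is the set of $n$-vertex graphs with chromatic number greater than $p$ that contain no subgraph isomorphic to $B_{p,q}$ and have the maximum number of edges among all such graphs. $G$ is a graph in $\mathcal{G}(n,p,q)$ whose minimum degree equals $\min_{F\in\mathcal{G}(n,p,q)}\delta(F)$. For $U\subseteq V(G)$, $e(U)$ is the number of edges of $G$ with both ends in $U$, and $d_U(v)=|N_G(v)\cap U|$. $V(G)=V_1\cup\cdots\cup V_p$ is a vertex partition of $G$ into $p$ parts minimizing $\sum_{i=1}^p e(V_i)$ among all partitions of $V(G)$ into $p$ parts. *)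

(* Defs.v *)
From HB Require Import structures.
From mathcomp Require Import all_boot all_order all_algebra.
From mathcomp Require Export reals.
Set Implicit Arguments. Unset Strict Implicit. Unset Printing Implicit Defensive.
Import Order.TTheory GRing.Theory Num.Theory.

Definition simple_graph n (g : rel 'I_n) : Prop := symmetric g /\ irreflexive g.

Definition e_in n (g : rel 'I_n) (U : {set 'I_n}) : nat :=
  #|[set x : 'I_n * 'I_n | [&& (x.1 < x.2)%N, g x.1 x.2, x.1 \in U & x.2 \in U]]|.

Definition num_edges n (g : rel 'I_n) : nat := e_in g [set: 'I_n].

Definition deg_in n (g : rel 'I_n) (U : {set 'I_n}) (v : 'I_n) : nat :=
  #|[set u in U | g v u]|.

Definition deg n (g : rel 'I_n) (v : 'I_n) : nat := deg_in g [set: 'I_n] v.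

(* minimum degree (n is an upper bound for every degree, so it serves as the
   neutral element; for n >= 1 this is the usual minimum degree). *)
Definition min_deg n (g : rel 'I_n) : nat := \big[minn/n]_(v : 'I_n) deg g v.

Definition colorable n (g : rel 'I_n) (k : nat) : Prop :=
  exists c : 'I_n -> 'I_k, forall x y, g x y -> c x != c y.

Definition chi_gt n (g : rel 'I_n) (p : nat) : Prop := ~ colorable g p.

(* B_{p,q} = K_p \nabla qK_1 on vertex set 'I_(p+q): vertices < p form the clique,
   vertices >= p the independent set, all clique-independent pairs adjacent. *)
Definition B_edge (p q : nat) : rel 'I_(p + q) :=
  fun i j => (i != j) && ((i < p)%N || (j < p)%N).

Definition contains_B n (g : rel 'I_n) (p q : nat) : Prop :=
  exists f : 'I_(p + q) -> 'I_n,
    injective f /\ forall i j, @B_edge p q i j -> g (f i) (f j).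

Definition admissible n p q (g : rel 'I_n) : Prop :=
  simple_graph g /\ chi_gt g p /\ ~ contains_B g p q.

Definition in_Gnpq n p q (g : rel 'I_n) : Prop :=
  @admissible n p q g /\
  forall h : rel 'I_n, @admissible n p q h -> (num_edges h <= num_edges g)%N.

(* V_i of a partition given as a labelling  part : 'I_n -> 'I_p *)
Definition part_class n p (part : 'I_n -> 'I_p) (i : 'I_p) : {set 'I_n} :=
  [set v | part v == i].

Definition inner_edges n p (g : rel 'I_n) (part : 'I_n -> 'I_p) : nat :=
  \sum_(i < p) e_in g (part_class part i).

Definition min_partition n p (g : rel 'I_n) (part : 'I_n -> 'I_p) : Prop :=
  forall part' : 'I_n -> 'I_p, (inner_edges g part <= inner_edges g part')%N.

Definition W_set (R : realType) n p (g : rel 'I_n) (part : 'I_n -> 'I_p)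
    (eta : R) : {set 'I_n} :=
  [set v | (2 * eta * n%:R <= (deg_in g (part_class part (part v)) v)%:R)%R].

(* Main.v *)
Require Import Defs.
From HB Require Import structures.
From mathcomp Require Import all_boot all_order all_algebra.
From mathcomp Require Import reals.
From mathcomp Require Import zify ring lra.
Import Order.TTheory GRing.Theory Num.Theory.
Set Implicit Arguments. Unset Strict Implicit. Unset Printing Implicit Defensive.

Lemma deg_sum n (g : rel 'I_n) S u : deg_in g S u = \sum_(v in S) (g u v : nat).
Proof.
rewrite /deg_in -sum1_card [RHS]big_mkcond [LHS]big_mkcond /=.
by apply: eq_bigr => v _; rewrite inE; case: (v \in S); case: (g u v).
Qed.

Definition Tsum n (g : rel 'I_n) (S : {set 'I_n}) :=
  \sum_(u in S) \sum_(v in S) (g u v : nat).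

Lemma e_in_sum n (g : rel 'I_n) S : simple_graph g -> 2 * e_in g S = Tsum g S.
Proof.
move=> [gs gi].
set P := fun x : 'I_n * 'I_n => [&& g x.1 x.2, x.1 \in S & x.2 \in S].
have -> : Tsum g S = \sum_(x : 'I_n * 'I_n) (P x : nat).
  rewrite /Tsum pair_big /= big_mkcond /=.
  by apply: eq_bigr => x _; rewrite /P; case: (x.1 \in S); case: (x.2 \in S); rewrite ?andbF ?andbT.
have -> : \sum_(x : 'I_n * 'I_n) (P x : nat) = \sum_(x : 'I_n * 'I_n) ((x.1 < x.2) && P x : nat)
     + \sum_(x : 'I_n * 'I_n) ((x.2 < x.1) && P x : nat).
  rewrite -big_split /=; apply: eq_bigr => x _.
  case Px: (P x); rewrite ?andbF //= !andbT.
  case: (ltngtP x.1 x.2) => // /val_inj E.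
  by move: Px; rewrite /P E gi.
have -> : \sum_(x : 'I_n * 'I_n) ((x.2 < x.1) && P x : nat) = \sum_(x : 'I_n * 'I_n) ((x.1 < x.2) && P x : nat).
  rewrite (reindex_inj (h := fun x : 'I_n * 'I_n => (x.2, x.1))) /=; last first.
    by move=> [a b] [c d] /= [-> ->].
  apply: eq_bigr => x _; congr (nat_of_bool (_ && _)).
  by rewrite /P /= gs [X in _ && X]andbC.
rewrite addnn -mul2n; congr (2 * _).
rewrite /e_in -sum1_card big_mkcond /=; apply: eq_bigr => x _.
by rewrite inE.
Qed.

Definition Bfree n (g : rel 'I_n) (S : {set 'I_n}) p q :=
  forall f : 'I_(p + q) -> 'I_n, injective f -> (forall i, f i \in S) ->
    (forall i j, @B_edge p q i j -> g (f i) (f j)) -> False.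

Lemma Bfree_nbr n (g : rel 'I_n) (S : {set 'I_n}) (p q : nat) (u : 'I_n) : simple_graph g -> u \in S ->
  Bfree g S p.+1 q -> Bfree g [set v in S | g u v] p q.
Proof.
move=> [gs gi] uS HB f finj fS fE.
have fS' : forall i, f i \in S by move=> i; move: (fS i); rewrite inE => /andP[].
have fu : forall i, g u (f i) by move=> i; move: (fS i); rewrite inE => /andP[].
pose f' (i : 'I_(p+q).+1) : 'I_n := if unlift ord0 i is Some j then f j else u.
apply: (HB f').
- move=> i j; rewrite /f'.
  case: (unliftP ord0 i) => [i'|] ->; case: (unliftP ord0 j) => [j'|] ->;
    rewrite ?liftK ?unlift_none //.
  + by move/finj ->.
  + by move=> E; move: (fu i'); rewrite E gi.
  + by move=> E; move: (fu j'); rewrite -E gi.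
- by move=> i; rewrite /f'; case: (unlift ord0 i).
- rewrite /B_edge /f'; change (forall i j : 'I_(p+q).+1, (i != j) && ((i < p.+1) || (j < p.+1)) ->
     g (if unlift ord0 i is Some j0 then f j0 else u) (if unlift ord0 j is Some j0 then f j0 else u)).
  move=> i j.
  case: (unliftP ord0 i) => [i'|] ->; case: (unliftP ord0 j) => [j'|] ->;
    rewrite ?liftK ?unlift_none //= ?gi ?andbF //.
  + rewrite (inj_eq (@lift_inj _ ord0)) => H; apply: fE; exact H.
  + by rewrite gs.
Qed.

Lemma Bfree0_card n (g : rel 'I_n) (X : {set 'I_n}) q : Bfree g X 0 q -> #|X| < q.
Proof.
move=> HB; rewrite ltnNge; apply/negP => Hq.
apply: (HB (fun i : 'I_q => enum_val (widen_ord Hq i))).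
- by move=> i j /enum_val_inj /(congr1 val) /= /val_inj.
- by move=> i; exact: enum_valP.
- by move=> i j; rewrite /B_edge !ltn0 andbF.
Qed.

Lemma deg_small n (g : rel 'I_n) (S : {set 'I_n}) q u : simple_graph g -> u \in S ->
  Bfree g S 1 q -> deg_in g S u < q.
Proof. by move=> sg uS HB; apply: Bfree0_card; apply: Bfree_nbr. Qed.

Definition Mc n (g : rel 'I_n) (S : {set 'I_n}) (c : 'I_n -> nat) :=
  \sum_(u in S) \sum_(v in S) ((g u v && (c u == c v)) : nat).

Lemma sum_split n (S A : {set 'I_n}) (F : 'I_n -> nat) : A \subset S ->
  \sum_(u in S) F u = \sum_(u in A) F u + \sum_(u in S :\: A) F u.
Proof. by move=> AS; rewrite (big_setID A) /= (setIidPr AS). Qed.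

Lemma Tsum_deg n (g : rel 'I_n) S : Tsum g S = \sum_(u in S) deg_in g S u.
Proof. by apply: eq_bigr => u _; rewrite deg_sum. Qed.

Lemma amgm a b : 2 * a * b <= a ^ 2 + b ^ 2.
Proof.
case: (leqP a b) => h.
  have [k ->] : exists k, b = a + k by exists (b - a); lia.
  rewrite !expnS !expn0 !muln1 !mulnDr !mulnDl; lia.
have [k ->] : exists k, a = b + k by exists (a - b); lia.
rewrite !expnS !expn0 !muln1 !mulnDr !mulnDl; lia.
Qed.

Lemma arith3 p D E : 2 * (p.+1 * E) * D <= (p.+1 * E) ^ 2 + D ^ 2 ->
 p.+2 * (p * D ^ 2) + p.+1 * (p.+2 * (2 * (E * D))) <= p.+1 * (p.+1 * (D + E) ^ 2).
Proof. move=> sq. nia. Qed.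

Lemma arith4 p q D E : p.+2 * (2 * p.+1 ^ 2 * q * D) <= p.+1 * (2 * p.+2 ^ 2 * q * (D + E)).
Proof. nia. Qed.

Lemma stab n (g : rel 'I_n) q : simple_graph g -> forall p, 0 < p ->
  forall S : {set 'I_n}, Bfree g S p q -> exists c : 'I_n -> nat,
    (forall v, c v < p) /\
    p * (Mc g S c + Tsum g S) <= (p - 1) * #|S| ^ 2 + 2 * p ^ 2 * q * #|S|.
Proof.
move=> sg; have [gs gi] := sg.
elim=> // p IH _ S HB; case: p IH HB => [|p] IH HB.
  exists (fun _ => 0); split => // .
  have -> : Mc g S (fun _ => 0) = Tsum g S.
    by apply: eq_bigr => u _; apply: eq_bigr => v _; rewrite eqxx andbT.
  have : Tsum g S <= q * #|S|.
    rewrite Tsum_deg mulnC -sum_nat_const; apply: leq_sum => u uS.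
    exact: ltnW (deg_small sg uS HB).
  lia.
case: (set_0Vmem S) => [->|[x0 Hx0]].
  exists (fun _ => 0); split => //.
  by rewrite /Mc /Tsum !big_set0 cards0; lia.
have [x xS xmax] := @arg_maxnP _ x0 (mem S) (deg_in g S) Hx0.
set A := [set v in S | g x v].
have HA : Bfree g A p.+1 q by apply: Bfree_nbr.
have [cA [hcA hIH]] := IH (ltn0Sn _) A HA.
have AS : A \subset S by apply/subsetP => v; rewrite inE => /andP[].
set B := S :\: A.
set D := #|A|.
have DS : D <= #|S| by exact: subset_leq_card.
have cardB : #|B| = #|S| - D by rewrite /B cardsD (setIidPr AS).
have degB : \sum_(u in B) deg_in g S u <= #|B| * D.
  rewrite -sum_nat_const; apply: leq_sum => u; rewrite inE => /andP[_ uS].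
  exact: xmax.
pose c v := if v \in A then cA v else p.+1.
exists c; split.
  by move=> v; rewrite /c; case: (v \in A) => //; have := hcA v; lia.
have hM : Mc g S c = Mc g A cA + Tsum g B.
  rewrite /Mc (sum_split _ AS); congr (_ + _).
    apply: eq_bigr => u uA.
    rewrite (sum_split _ AS) [X in _ + X]big1 ?addn0.
      by apply: eq_bigr => v vA; rewrite /c uA vA.
    move=> v; rewrite inE => /andP[vA _]; rewrite /c uA (negbTE vA).
    by rewrite (ltn_eqF (hcA u)) andbF.
  rewrite /Tsum; apply: eq_bigr => u; rewrite inE => /andP[uA _].
  rewrite (sum_split _ AS) big1 ?add0n.
    by apply: eq_bigr => v; rewrite inE => /andP[vA _]; rewrite /c (negbTE uA) (negbTE vA) eqxx andbT.
  by move=> v vA; rewrite /c vA (negbTE uA) eq_sym (ltn_eqF (hcA v)) andbF.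
have hT : Tsum g S = Tsum g A + \sum_(u in A) \sum_(v in B) (g u v : nat) + \sum_(u in B) deg_in g S u.
  rewrite {1}/Tsum (sum_split _ AS); congr (_ + _).
    rewrite /Tsum -big_split /=; apply: eq_bigr => u _; exact: sum_split.
  by apply: eq_bigr => u _; rewrite deg_sum.
have hX : \sum_(u in A) \sum_(v in B) (g u v : nat) + Tsum g B = \sum_(u in B) deg_in g S u.
  rewrite exchange_big /Tsum -big_split /=; apply: eq_bigr => u _.
  rewrite deg_sum (sum_split _ AS); congr (_ + _); apply: eq_bigr => v _; by rewrite gs.
have key : Mc g S c + Tsum g S = Mc g A cA + Tsum g A + 2 * \sum_(u in B) deg_in g S u.
  rewrite hM hT -hX; lia.
rewrite key.
move: hIH degB; rewrite cardB -/D.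
set X := Mc g A cA + Tsum g A; set Y := \sum_(u in B) deg_in g S u; set m := #|S|.
move=> hIH degB.
rewrite !subSS subn0 in hIH *.
move: DS; rewrite -/m => DS.
clearbody X Y m D.
have [E ?] : exists E, m = D + E by exists (m - D); lia.
subst m.
rewrite addKn in degB.
set P := p.+1 in hIH *.
have sq : 2 * (P * E) * D <= (P * E) ^ 2 + D ^ 2 by exact: amgm.
rewrite -(leq_pmul2l (ltn0Sn p)) -/P.
have h1 : P * (P.+1 * X) <= P.+1 * (p * D ^ 2 + 2 * P ^ 2 * q * D).
  by rewrite mulnCA leq_mul2l hIH orbT.
have h2 : P * (P.+1 * (2 * Y)) <= P * (P.+1 * (2 * (E * D))).
  by rewrite !leq_mul2l degB !orbT.
have h3 := arith3 sq. have h4 := arith4 p q D E.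
rewrite mulnDr mulnDr; rewrite mulnDr in h1; lia.
Qed.

Definition adj5 (u v : nat) := (u.+1 %% 5 == v) || (v.+1 %% 5 == u).
Definition Hn p (u v : nat) : bool :=
  if u < 5 then (if v < 5 then adj5 u v else 2 <= v %% p)
  else (if v < 5 then 2 <= u %% p else u %% p != v %% p).
Definition Hg n p : rel 'I_n := fun u v => Hn p u v.
Arguments Hg n p : clear implicits.

Lemma adj5_tri u v w : u < 5 -> v < 5 -> w < 5 -> adj5 u v -> adj5 v w -> adj5 u w -> False.
Proof.
by do 5?[case: u => [|u]] => //; do 5?[case: v => [|v]] => //; do 5?[case: w => [|w]].
Qed.

Lemma Hg_simple n p : simple_graph (Hg n p).
Proof.
split.
  move=> u v; rewrite /Hg /Hn; case: (u < 5); case: (v < 5) => //.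
    by rewrite /adj5 orbC.
  by rewrite eq_sym.
move=> u; rewrite /Hg /Hn; case: ltnP => // h; last by rewrite eqxx.
by move: h; case: (nat_of_ord u) => [|[|[|[|[|]]]]].
Qed.

Lemma pigeon (T : finType) (X : {set T}) (h : T -> nat) m :
  {in X &, injective h} -> (forall x, x \in X -> h x < m) -> #|X| <= m.
Proof.
move=> hinj hb.
rewrite cardE -(size_map h) -(size_iota 0 m).
apply: uniq_leq_size.
  rewrite map_inj_in_uniq ?enum_uniq // => x y; rewrite !mem_enum; exact: hinj.
move=> y /mapP [x]; rewrite mem_enum => xX ->.
by rewrite mem_iota add0n hb.
Qed.

Lemma modv p k : k < p -> (5 * p + k) %% p = k.
Proof. by move=> kp; rewrite modnMDl modn_small. Qed.

Lemma Hg_chi n p : 3 <= p -> 6 * p <= n -> chi_gt (Hg n p) p.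
Proof.
move=> p3 np [c Hc].
case: n np c Hc => [|n'] np c Hc; first lia.
pose col (k : nat) : nat := c (inord k).
have adj : forall a b, a < n'.+1 -> b < n'.+1 -> Hn p a b -> col a != col b.
  move=> a b ha hb hab; rewrite /col; have := Hc (inord a) (inord b).
  by rewrite /Hg !inordK // => /(_ hab); rewrite val_eqE.
have colb : forall k, col k < p by move=> k; exact: ltn_ord.
have clash : forall a b d, a < 5 -> b < 5 -> d < 5 ->
    col a != col b -> col b != col d -> col a != col d -> False.
  move=> a b d ha hb hd hab hbd had.
  pose vv (i : nat) := if i == 0 then a else if i == 1 then b else if i == 2 then d
                       else 5 * p + i.-1.
  have vvlt : forall i, i < p.+1 -> vv i < n'.+1.
    move=> i ip; rewrite /vv; case: eqP => _; first lia.
    case: eqP => _; first lia. case: eqP => _; lia.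
  have vvbig : forall i, 3 <= i -> vv i = 5 * p + i.-1.
    by move=> [|[|[|i]]].
  have vvsmall : forall i, i < 3 -> vv i < 5.
    by move=> [|[|[|i]]].
  suff : p.+1 <= p by rewrite ltnn.
  have := @pigeon _ [set: 'I_p.+1] (fun i => col (vv i)) p.
  rewrite cardsT card_ord; apply => //.
  move=> i j _ _ /eqP; apply: contraTeq => ij.
  have ijn : (i : nat) != j by [].
  have hi := ltn_ord i; have hj := ltn_ord j.
  case: (ltnP i 3) => i3; case: (ltnP j 3) => j3.
  - move: ijn hab hbd had; rewrite /vv.
    move: i3 j3; case: (nat_of_ord i) => [|[|[|]]] //; case: (nat_of_ord j) => [|[|[|]]] //=;
      by move=> *; rewrite 1?eq_sym.
  - have f5 : (5 * p + j.-1 < 5) = false by apply/negbTE; rewrite -leqNgt; lia.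
    apply: adj; try exact: vvlt.
    rewrite /Hn (vvsmall _ i3) (vvbig _ j3) f5 modv; lia.
  - have f5 : (5 * p + i.-1 < 5) = false by apply/negbTE; rewrite -leqNgt; lia.
    apply: adj; try exact: vvlt.
    rewrite /Hn (vvsmall _ j3) (vvbig _ i3) f5 modv; lia.
  - have f5 : (5 * p + i.-1 < 5) = false by apply/negbTE; rewrite -leqNgt; lia.
    have f5' : (5 * p + j.-1 < 5) = false by apply/negbTE; rewrite -leqNgt; lia.
    apply: adj; try exact: vvlt.
    rewrite /Hn (vvbig _ j3) (vvbig _ i3) f5 f5' !modv; lia.
have e : forall a b, a < 5 -> b < 5 -> adj5 a b -> col a != col b.
  move=> a b ha hb hab; apply: adj; try lia.
  by rewrite /Hn ha hb.
have e01 := e 0 1 isT isT isT. have e12 := e 1 2 isT isT isT.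
have e23 := e 2 3 isT isT isT. have e34 := e 3 4 isT isT isT.
have e40 := e 4 0 isT isT isT.
case: (eqVneq (col 0) (col 2)) => h02; last first.
  by apply: (clash 0 1 2).
case: (eqVneq (col 2) (col 4)) => h24; last first.
  by apply: (clash 2 3 4).
by move: e40; rewrite -h24 -h02 eqxx.
Qed.

Lemma Hg_noB n p q : 3 <= p -> 1 <= q -> ~ contains_B (Hg n p) p q.
Proof.
move=> p3 q1 [f [finj fE]].
have wq : p.+1 <= p + q by lia.
pose k (i : 'I_p.+1) : 'I_n := f (widen_ord wq i).
have kinj : injective k by move=> i j /finj /(congr1 val) /= /val_inj.
have kc : forall i j, i != j -> Hn p (k i) (k j).
  move=> i j ij; apply: (fE (widen_ord wq i) (widen_ord wq j)).
  rewrite /B_edge; apply/andP; split.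
    by rewrite -(inj_eq val_inj) /= (inj_eq val_inj).
  have ijn : (i : nat) != j by [].
  have := ltn_ord i; have := ltn_ord j; rewrite /=; lia.
set a0 := [pick i | k i < 5].
have a0P : forall i, k i < 5 -> exists i0, a0 = Some i0 /\ k i0 < 5.
  move=> i hi; rewrite /a0; case: pickP => [i0 h0|/(_ i)]; first by exists i0.
  by rewrite hi.
pose h (i : 'I_p.+1) : nat :=
  if k i < 5 then (if a0 is Some i0 then (if i == i0 then 0 else 1) else 0) else k i %% p.
suff : p.+1 <= p by rewrite ltnn.
have := @pigeon _ [set: 'I_p.+1] h p; rewrite cardsT card_ord; apply.
  move=> i j _ _ hij; apply/eqP; apply: contraT => ij.
  rewrite /h in hij.
  case: (ltnP (k i) 5) => hi; case: (ltnP (k j) 5) => hj.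
  - have [i0 [Ha h0]] := a0P i hi; rewrite Ha hi hj in hij.
    have [ii0|ii0] := eqVneq i i0; have [ji0|ji0] := eqVneq j i0.
    + by rewrite ii0 ji0 eqxx in ij.
    + by move: hij; rewrite ii0 eqxx (negbTE ji0).
    + by move: hij; rewrite ji0 eqxx (negbTE ii0).
    have t1 := kc i j ij; have t2 := kc j i0 ji0; have t3 := kc i i0 ii0.
    rewrite /Hn hi hj h0 in t1 t2 t3.
    by case: (adj5_tri hi hj h0 t1 t2 t3).
  - have [i0 [Ha h0]] := a0P i hi; rewrite Ha in hij.
    have ji0 : j != i0 by apply: contraTneq hj => ->; rewrite -ltnNge.
    have t := kc j i0 ji0; rewrite /Hn h0 ltnNge hj /= in t.
    rewrite hi (ltnNge (k j)) hj /= in hij.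
    move: hij; case: (i == i0); lia.
  - have [j0 [Ha h0]] := a0P j hj; rewrite Ha in hij.
    have ij0 : i != j0 by apply: contraTneq hi => ->; rewrite -ltnNge.
    have t := kc i j0 ij0; rewrite /Hn h0 ltnNge hi /= in t.
    rewrite hj (ltnNge (k i)) hi /= in hij.
    move: hij; case: (j == j0); lia.
  - have t := kc i j ij; rewrite /Hn (ltnNge (k i)) (ltnNge (k j)) hi hj /= in t.
    rewrite (ltnNge (k i)) (ltnNge (k j)) hi hj /= in hij.
    by rewrite hij eqxx in t.
move=> i _; rewrite /h; case: (k i < 5); last by rewrite ltn_mod; lia.
by case: (a0) => [i0|]; [case: (i == i0)|]; lia.
Qed.

Lemma edges_arith n p t m : 3 <= p -> 6 * p <= n -> t * p <= n -> n <= m + 5 ->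
  (p - 1) * n ^ 2 <= p * (m * (n - 6 - t)) + 11 * p * n.
Proof.
move=> p3 np tp nm.
have h1 : (p - 1) * n - 6 * p <= p * (n - 6 - t) by nia.
have h2 : (n - 5) * ((p - 1) * n - 6 * p) <= p * (m * (n - 6 - t)).
  rewrite mulnCA; apply: leq_mul => //; lia.
apply: leq_trans (leq_add h2 (leqnn _)).
have [n1 en] : exists n1, n = n1 + 5 by exists (n - 5); lia.
have [P eP] : exists P, p = P + 1 by exists (p - 1); lia.
have [x ex] : exists x, (p - 1) * n = x + 6 * p.
  exists ((p - 1) * n - 6 * p). have : 6 * p <= (p - 1) * n by nia. lia.
have xb : x <= p * n.
  have : (p - 1) * n <= p * n by apply: leq_mul => //; lia.
  lia.
rewrite ex addnK en addnK.
have -> : (p - 1) * (n1 + 5) ^ 2 = (n1 + 5) * (x + 6 * p).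
  by rewrite -en -ex mulnCA mulnn.
rewrite en in xb.
rewrite mulnDl mulnDr mulnDr mulnDr.
have : x <= p * n1 + p * 5 by rewrite -mulnDr.
lia.
Qed.

Lemma Hg_edges n p : 3 <= p -> 6 * p <= n ->
  (p - 1) * n ^ 2 <= p * Tsum (Hg n p) setT + 11 * p * n.
Proof.
move=> p3 np.
set U5 := [set u : 'I_n | 5 <= u].
have cU5 : n <= #|U5| + 5.
  have hc := cardsC U5; rewrite card_ord in hc.
  suff : #|~: U5| <= 5 by lia.
  apply: (@pigeon _ _ (fun x : 'I_n => (x : nat))).
    by move=> x y _ _ /val_inj.
  by move=> x; rewrite !inE -ltnNge.
set t := n %/ p.
have degU : forall u, u \in U5 -> n - 6 - t <= deg_in (Hg n p) setT u.
  move=> u; rewrite inE => u5.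
  set X1 := [set v in setT | Hg n p u v].
  set X3 := [set v : 'I_n | v %% p == u %% p].
  have c3 : #|X3| <= t.+1.
    apply: (@pigeon _ X3 (fun v : 'I_n => v %/ p)).
      move=> x y; rewrite !inE => /eqP hx /eqP hy hxy.
      apply: val_inj => /=; rewrite (divn_eq x p) (divn_eq y p) hxy hx hy //.
    move=> x _; rewrite ltnS; apply: leq_div2r; exact: ltnW.
  have cov : [set: 'I_n] \subset X1 :|: ~: U5 :|: X3.
    apply/subsetP => v _; rewrite !inE /Hg /Hn.
    rewrite (ltnNge u) u5 /=.
    case: (ltnP v 5) => v5 /=; first by rewrite !orbT.
    by rewrite orbF eq_sym; case: eqP.
  have := subset_leq_card cov; rewrite cardsT card_ord => hn.
  have := (leq_card_setU (X1 :|: ~: U5) X3).1.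
  have := (leq_card_setU X1 (~: U5)).1.
  have := cardsC U5; rewrite card_ord.
  rewrite /deg_in -/X1.
  move: cU5 c3 hn.
  set a := #|U5|; set b := #|~: U5|; set x1 := #|X1|; set y := #|X1 :|: ~: U5|.
  set z := #|X1 :|: ~: U5 :|: X3|; set w := #|X3|.
  lia.
rewrite Tsum_deg.
have AS : U5 \subset [set: 'I_n] by apply/subsetP.
rewrite (sum_split _ AS).
have : \sum_(u in U5) (n - 6 - t) <= \sum_(u in U5) deg_in (Hg n p) [set: 'I_n] u.
  by apply: leq_sum => u uU; apply: degU.
rewrite sum_nat_const => hs.
have := @edges_arith n p t #|U5| p3 np (leq_trunc_div n p) _.
move=> /(_ cU5).
move=> h; apply: (leq_trans h).
rewrite leq_add2r leq_mul2l; apply/orP; right.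
exact: leq_trans hs (leq_addr _ _).
Qed.

Lemma inner_deg n p (g : rel 'I_n) (part : 'I_n -> 'I_p) : simple_graph g ->
  2 * inner_edges g part = \sum_u deg_in g (part_class part (part u)) u.
Proof.
move=> sg; rewrite /inner_edges big_distrr /=.
rewrite [RHS](partition_big part xpredT) //=.
apply: eq_bigr => i _; rewrite e_in_sum // Tsum_deg.
rewrite [RHS](eq_bigr (fun u => deg_in g (part_class part i) u)); last first.
  by move=> u /eqP ->.
by apply: eq_bigl => u; rewrite inE.
Qed.

Lemma part0_deg n p (g : rel 'I_n) (c : 'I_n -> nat) (hc : forall v, c v < p) :
  \sum_u deg_in g (part_class (fun v => Ordinal (hc v)) (Ordinal (hc u))) u = Mc g setT c.
Proof.
rewrite /Mc; apply: eq_big => [u|u _]; first by rewrite inE.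
rewrite deg_sum big_mkcond [RHS]big_mkcond /=.
apply: eq_bigr => v _; rewrite !inE /=.
have -> : (Ordinal (hc v) == Ordinal (hc u)) = (c u == c v) by rewrite eq_sym.
by case: (c u == c v); rewrite ?andbT ?andbF.
Qed.

Lemma main_nat n p q (g : rel 'I_n) (part : 'I_n -> 'I_p) : 3 <= p -> 1 <= q -> 6 * p <= n ->
  in_Gnpq p q g -> min_partition g part ->
  \sum_u deg_in g (part_class part (part u)) u <= (2 * p * q + 11) * n.
Proof.
move=> p3 q1 np [[sg [chi noB]] gmax] hmin.
have Bf : Bfree g setT p q by move=> f fi _ fE; apply: noB; exists f.
have p0 : 0 < p by lia.
have [c [hc hst]] := stab sg p0 Bf.
have := hmin (fun v => Ordinal (hc v)).
rewrite -(leq_pmul2l (isT : 0 < 2)) inner_deg // inner_deg // part0_deg => hD.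
have adH : admissible p q (Hg n p).
  split; first exact: Hg_simple.
  split; [exact: Hg_chi | exact: Hg_noB].
have := gmax _ adH.
rewrite -(leq_pmul2l (isT : 0 < 2)) /num_edges !e_in_sum //; last exact: Hg_simple.
move=> hT.
have hE := Hg_edges p3 np.
rewrite cardsT card_ord in hst.
apply: (leq_trans hD).
have : p * Mc g setT c <= p * ((2 * p * q + 11) * n).
  have : p * Tsum (Hg n p) setT <= p * Tsum g setT by rewrite leq_mul2l hT orbT.
  have E : p * ((2 * p * q + 11) * n) = 2 * p ^ 2 * q * n + 11 * p * n.
    nia.
  rewrite mulnDr in hst; rewrite E.
  lia.
by rewrite leq_pmul2l.
Qed.

Unset Implicit Arguments.

Theorem lemma3p3 (R : realType) (p q : nat) (eta : R) :
  (3 <= p)%N -> (1 <= q)%N ->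
  (0 < eta)%R -> (eta < 1 / (7 * p ^ 5 * q)%:R)%R ->
  exists N : nat, forall n : nat, (N <= n)%N ->
  forall (g : rel 'I_n) (part : 'I_n -> 'I_p),
    in_Gnpq p q g ->
    (forall F : rel 'I_n, in_Gnpq p q F -> (min_deg g <= min_deg F)%N) ->
    min_partition g part ->
    ((#|W_set g part eta|)%:R <= eta * n%:R / 2)%R.
Proof.
move=> p3 q1 eta0 _.
set K := (2 * p * q + 11)%N.
exists (maxn (6 * p) (Num.Def.trunc ((K%:R : R) / eta ^+ 2)).+1).
move=> n; rewrite geq_max => /andP[np hN] g part hG _ hmin.
have hsum := main_nat p3 q1 np hG hmin.
set W := W_set g part eta.
set F := fun v => deg_in g (part_class part (part v)) v.
have hWs : (\sum_(v in W) F v <= K * n)%N.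
  apply: leq_trans hsum; rewrite big_mkcond /=; apply: leq_sum => v _.
  by case: (v \in W).
have hW : ((#|W|%:R : R) * (2 * eta * n%:R) <= (K * n)%:R)%R.
  apply: (@le_trans _ _ (\sum_(v in W) (F v)%:R)%R).
    rewrite mulr_natl -sumr_const; apply: ler_sum => v; rewrite inE.
    by [].
  by rewrite -natr_sum ler_nat.
have n0 : (0 < n%:R :> R)%R by rewrite ltr0n; lia.
have e2 : (0 < eta ^+ 2)%R by rewrite exprn_gt0.
have hK : ((K%:R : R) < eta ^+ 2 * n%:R)%R.
  have : (Num.Def.trunc ((K%:R : R) / eta ^+ 2) < n)%N by [].
  rewrite truncn_lt_nat; last by rewrite divr_ge0 // ltW.
  by rewrite ltr_pdivrMr // mulrC.
move: hW hK; rewrite natrM.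
set w := (#|W|%:R : R)%R; set k := (K%:R : R)%R; set m := (n%:R : R)%R.
move=> hW hK.
have hW' : (w * (2 * eta) <= k)%R.
  by rewrite -(ler_pM2r n0) -mulrA.
rewrite expr2 in hK.
nra.
Qed.
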